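(* Let $({\mathcal B};{\mathcal V},{\mathcal H};{\mathcal P})$ be a slim (discrete) double groupoid satisfying the filling condition, and let $(f_1,x_1),(f_2,x_2)\in{\mathcal V}\times_{b,l}{\mathcal H}$. Then $(f_1,x_1)\sim_{\mathcal B}(f_2,x_2)$ if and only if there exist $x\in{\mathcal H}$, $g\in{\mathcal V}$ and boxes $A,B\in{\mathcal B}$ with $t(A)=x,\ r(A)=g,\ l(A)=f_1,\ b(A)=x_1$ and $t(B)=x,\ r(B)=g,\ l(B)=f_2,\ b(B)=x_2$.
   Context: Double groupoid $({\mathcal B};{\mathcal V},{\mathcal H};{\mathcal P})$: ${\mathcal V}$ and ${\mathcal H}$ are groupoids over ${\mathcal P}$ (for ${\mathcal V}$ source/end $t,b$; for ${\mathcal H}$ source/end $l,r$); ${\mathcal B}$ is a set of boxes $A$ with top/bottom sides $t(A),b(A)\in{\mathcal H}$ and left/right sides $l(A),r(A)\in{\mathcal V}$, with a horizontal groupoid structure over ${\mathcal V}$ (source $l$, target $r$) and a vertical groupoid structure over ${\mathcal H}$ (source $t$, target $b$), compatible in the sense that the structure maps of each are morphisms for the other. Slim: each box is determined by its four sides. Filling condition: for every $x\in{\mathcal H}$, $f\in{\mathcal V}$ with $l(x)=t(f)$ there is a box with top $x$ and left side $f$. ${\mathcal V}\circledast{\mathcal H}$ is the free product groupoid of ${\mathcal V}$ and ${\mathcal H}$ over ${\mathcal P}$. For a box $A$ with top $x$, right $g$, bottom $y$, left $h$, $[A]=xgy^{-1}h^{-1}\in{\mathcal V}\circledast{\mathcal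 H}$, and $J_\circledast({\mathcal B})$ is the subgroupoid generated by all $[A]$. The relation $\sim_{\mathcal B}$ on ${\mathcal V}\times_{b,l}{\mathcal H}=\{(f,x):b(f)=l(x)\}$ is: $(f_1,x_1)\sim_{\mathcal B}(f_2,x_2)$ iff $r(x_1)=r(x_2)$, $t(f_1)=t(f_2)$ and $f_1x_1x_2^{-1}f_2^{-1}\in J_\circledast({\mathcal B})$. *)

(* Defs.v *)
From Stdlib Require Import List Relations.
Import ListNotations.
Set Implicit Arguments.
Unset Strict Implicit.

(* Composition is written diagrammatically: gcomp f g = "f then g",    *)
(* defined (meaningfully) when gtgt f = gsrc g.                        *)
Record groupoid_on (P A : Type) := Groupoid {
  gsrc : A -> P;
  gtgt : A -> P;
  gid : P -> A;
  gcomp : A -> A -> A;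
  ginv : A -> A;
  gsrc_id : forall p, gsrc (gid p) = p;
  gtgt_id : forall p, gtgt (gid p) = p;
  gsrc_comp : forall f g, gtgt f = gsrc g -> gsrc (gcomp f g) = gsrc f;
  gtgt_comp : forall f g, gtgt f = gsrc g -> gtgt (gcomp f g) = gtgt g;
  gcompA : forall f g h, gtgt f = gsrc g -> gtgt g = gsrc h ->
             gcomp (gcomp f g) h = gcomp f (gcomp g h);
  gcomp_id_l : forall f, gcomp (gid (gsrc f)) f = f;
  gcomp_id_r : forall f, gcomp f (gid (gtgt f)) = f;
  gsrc_inv : forall f, gsrc (ginv f) = gtgt f;
  gtgt_inv : forall f, gtgt (ginv f) = gsrc f;
  gcomp_inv_r : forall f, gcomp f (ginv f) = gid (gsrc f);
  gcomp_inv_l : forall f, gcomp (ginv f) f = gid (gtgt f)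
}.

Definition is_gmorph (P A Q B : Type) (GA : groupoid_on P A) (GB : groupoid_on Q B)
  (F : A -> B) (F0 : P -> Q) : Prop :=
  (forall f, gsrc GB (F f) = F0 (gsrc GA f)) /\
  (forall f, gtgt GB (F f) = F0 (gtgt GA f)) /\
  (forall p, F (gid GA p) = gid GB (F0 p)) /\
  (forall f g, gtgt GA f = gsrc GA g -> F (gcomp GA f g) = gcomp GB (F f) (F g)).

(*  V : vertical groupoid over P, source t, target b.                  *)
(*  H : horizontal groupoid over P, source l, target r.                *)
(*  B : boxes; horizontal groupoid over V (source l, target r) and     *)
(*      vertical groupoid over H (source t, target b).                 *)
Record double_groupoid (P V H B : Type) := DoubleGroupoid {
  dV : groupoid_on P V;
  dH : groupoid_on P H;
  dBh : groupoid_on V B;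
  dBv : groupoid_on H B;
  dg_t_morph : is_gmorph dBh dH (gsrc dBv) (gsrc dV);
  dg_b_morph : is_gmorph dBh dH (gtgt dBv) (gtgt dV);
  dg_l_morph : is_gmorph dBv dV (gsrc dBh) (gsrc dH);
  dg_r_morph : is_gmorph dBv dV (gtgt dBh) (gtgt dH);
  dg_idh_morph : is_gmorph dV dBv (gid dBh) (gid dH);
  dg_idv_morph : is_gmorph dH dBh (gid dBv) (gid dV);
  dg_invh_morph : is_gmorph dBv dBv (ginv dBh) (ginv dH);
  dg_invv_morph : is_gmorph dBh dBh (ginv dBv) (ginv dV);
  dg_interchange : forall A1 A2 C1 C2,
      gtgt dBh A1 = gsrc dBh A2 -> gtgt dBh C1 = gsrc dBh C2 ->
      gtgt dBv A1 = gsrc dBv C1 -> gtgt dBv A2 = gsrc dBv C2 ->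
      gcomp dBv (gcomp dBh A1 A2) (gcomp dBh C1 C2)
      = gcomp dBh (gcomp dBv A1 C1) (gcomp dBv A2 C2)
}.

Section Notions.
Variables (P V H B : Type) (D : double_groupoid P V H B).

Definition bt (A : B) : H := gsrc (dBv D) A.
Definition bb (A : B) : H := gtgt (dBv D) A.
Definition bl (A : B) : V := gsrc (dBh D) A.
Definition br (A : B) : V := gtgt (dBh D) A.

Definition slim : Prop :=
  forall A A' : B, bt A = bt A' -> bb A = bb A' -> bl A = bl A' -> br A = br A' -> A = A'.

Definition filling : Prop :=
  forall (x : H) (f : V), gsrc (dH D) x = gsrc (dV D) f ->
    exists A : B, bt A = x /\ bl A = f.

(* Free product groupoid V [*] H over P: morphisms are composable      *)
(* words in letters from V and H (diagrammatic order), modulo the      *)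
(* congruence generated by composing adjacent letters from the same    *)
(* groupoid and deleting identity letters.  A morphism is represented  *)
(* by a start object p and a word valid from p.                        *)
Definition letter := (V + H)%type.

Definition lsrc (a : letter) : P :=
  match a with inl f => gsrc (dV D) f | inr x => gsrc (dH D) x end.
Definition ltgt (a : letter) : P :=
  match a with inl f => gtgt (dV D) f | inr x => gtgt (dH D) x end.

Fixpoint valid (p : P) (w : list letter) : Prop :=
  match w with
  | [] => True
  | a :: w' => lsrc a = p /\ valid (ltgt a) w'
  end.

Inductive fp_step : list letter -> list letter -> Prop :=
| fp_mergeV : forall w1 w2 f g, gtgt (dV D) f = gsrc (dV D) g ->
    fp_step (w1 ++ inl f :: inl g :: w2) (w1 ++ inl (gcomp (dV D) f g) :: w2)
| fp_mergeH : forall w1 w2 x y, gtgt (dH D) x = gsrc (dH D) y ->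
    fp_step (w1 ++ inr x :: inr y :: w2) (w1 ++ inr (gcomp (dH D) x y) :: w2)
| fp_idV : forall w1 w2 q, fp_step (w1 ++ inl (gid (dV D) q) :: w2) (w1 ++ w2)
| fp_idH : forall w1 w2 q, fp_step (w1 ++ inr (gid (dH D) q) :: w2) (w1 ++ w2).

Definition fp_rel (p : P) : relation (list letter) :=
  fun w w' => valid p w /\ valid p w' /\ fp_step w w'.

Definition fp_equiv (p : P) : relation (list letter) :=
  clos_refl_sym_trans _ (fp_rel p).

Definition box_word (A : B) : list letter :=
  [inr (bt A); inl (br A); inr (ginv (dH D) (bb A)); inl (ginv (dV D) (bl A))].

Definition box_word_inv (A : B) : list letter :=
  [inl (bl A); inr (bb A); inl (ginv (dV D) (br A)); inr (ginv (dH D) (bt A))].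

Definition signed_box_word (s : B * bool) : list letter :=
  if snd s then box_word (fst s) else box_word_inv (fst s).

(* membership in J_[*](B), the subgroupoid generated by all [A]:
   the morphism is (equal in V [*] H to) a composable product of
   generators [A] and their inverses (empty product = identity at p) *)
Definition inJ (p : P) (w : list letter) : Prop :=
  exists s : list (B * bool),
    valid p (flat_map signed_box_word s) /\ fp_equiv p (flat_map signed_box_word s) w.

Definition simB (fx1 fx2 : V * H) : Prop :=
  let (f1, x1) := fx1 in let (f2, x2) := fx2 in
  gtgt (dH D) x1 = gtgt (dH D) x2 /\
  gsrc (dV D) f1 = gsrc (dV D) f2 /\
  inJ (gsrc (dV D) f1)
      [inl f1; inr x1; inr (ginv (dH D) x2); inl (ginv (dV D) f2)].

End Notions.

(* Main.v *)
Require Import Defs.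
From Stdlib Require Import List Relations FunctionalExtensionality PropExtensionality.
Import ListNotations.
Set Implicit Arguments.
Unset Strict Implicit.

Section GL.
Context {Pt At : Type} (G : groupoid_on Pt At).

Lemma g_idl p f : gsrc G f = p -> gcomp G (gid G p) f = f.
Proof. intros <-; apply gcomp_id_l. Qed.
Lemma g_idr p f : gtgt G f = p -> gcomp G f (gid G p) = f.
Proof. intros <-; apply gcomp_id_r. Qed.

Lemma g_inv_unique a b : gtgt G a = gsrc G b -> gcomp G a b = gid G (gsrc G a) -> b = ginv G a.
Proof.
  intros E1 E2.
  rewrite <- (gcomp_id_l G b). rewrite <- E1, <- gcomp_inv_l.
  rewrite gcompA; [| apply gtgt_inv | exact E1].
  rewrite E2. apply g_idr. apply gtgt_inv.
Qed.

Lemma g_inv_inv f : ginv G (ginv G f) = f.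
Proof.
  symmetry; apply g_inv_unique. apply gtgt_inv.
  rewrite gcomp_inv_l, gsrc_inv; reflexivity.
Qed.

Lemma g_cK1 f g : gtgt G f = gsrc G g -> gcomp G (gcomp G f g) (ginv G g) = f.
Proof. intros E. rewrite gcompA; [| exact E | symmetry; apply gsrc_inv].
  rewrite gcomp_inv_r. apply g_idr; exact E. Qed.

Lemma g_cK2 f g : gtgt G f = gsrc G g -> gcomp G (ginv G f) (gcomp G f g) = g.
Proof. intros E. rewrite <- gcompA; [| apply gtgt_inv | exact E].
  rewrite gcomp_inv_l. apply g_idl; symmetry; exact E. Qed.

Lemma g_cK3 f g : gtgt G f = gtgt G g -> gcomp G (gcomp G f (ginv G g)) g = f.
Proof. intros E. rewrite gcompA; [| rewrite gsrc_inv; exact E | apply gtgt_inv].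
  rewrite gcomp_inv_l. apply g_idr; exact E. Qed.

Lemma g_cK4 f g : gsrc G f = gsrc G g -> gcomp G f (gcomp G (ginv G f) g) = g.
Proof. intros E. rewrite <- gcompA; [| symmetry; apply gsrc_inv | rewrite gtgt_inv; exact E].
  rewrite gcomp_inv_r. apply g_idl; symmetry; exact E. Qed.

Lemma g_inv_r' p f : gsrc G f = p -> gcomp G f (ginv G f) = gid G p.
Proof. intros <-; apply gcomp_inv_r. Qed.
End GL.

Lemma morph_inv (P A Q B : Type) (GA : groupoid_on P A) (GB : groupoid_on Q B) F F0 :
  is_gmorph GA GB F F0 -> forall f, F (ginv GA f) = ginv GB (F f).
Proof.
  intros [Hs [Ht [Hi Hc]]] f. apply g_inv_unique.
  - rewrite Ht, Hs, gsrc_inv; reflexivity.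
  - rewrite <- Hc by (symmetry; apply gsrc_inv).
    rewrite gcomp_inv_r, Hi, Hs; reflexivity.
Qed.
Arguments morph_inv {P A Q B GA GB F F0} _ _.
Section DG.
Context {P V H B : Type} (D : double_groupoid P V H B) (Hfill : filling D).

Local Notation cV := (gcomp (dV D)).
Local Notation cH := (gcomp (dH D)).
Local Notation iV := (ginv (dV D)).
Local Notation iH := (ginv (dH D)).
Local Notation sV := (gsrc (dV D)).
Local Notation tV := (gtgt (dV D)).
Local Notation sH := (gsrc (dH D)).
Local Notation tH := (gtgt (dH D)).
Local Notation eV := (gid (dV D)).
Local Notation eH := (gid (dH D)).

Definition Box (t : H) (r : V) (b : H) (l : V) : Prop :=
  exists A, bt D A = t /\ br D A = r /\ bb D A = b /\ bl D A = l.

Lemma box_corners t r b l : Box t r b l ->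
  sH t = sV l /\ tH t = sV r /\ sH b = tV l /\ tH b = tV r.
Proof.
  intros [A [<- [<- [<- <-]]]]. unfold bt, br, bb, bl.
  destruct (dg_t_morph D) as [a [b' _]]. destruct (dg_b_morph D) as [c [d _]].
  auto.
Qed.

Lemma box_hcomp t1 r1 b1 l1 t2 r2 b2 :
  Box t1 r1 b1 l1 -> Box t2 r2 b2 r1 -> Box (cH t1 t2) r2 (cH b1 b2) l1.
Proof.
  intros [A1 [E1 [E2 [E3 E4]]]] [A2 [F1 [F2 [F3 F4]]]].
  assert (K : gtgt (dBh D) A1 = gsrc (dBh D) A2) by (unfold br, bl in *; congruence).
  exists (gcomp (dBh D) A1 A2). unfold bt, br, bb, bl in *.
  destruct (dg_t_morph D) as [_ [_ [_ a]]]. destruct (dg_b_morph D) as [_ [_ [_ b]]].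
  rewrite a, b, gtgt_comp, gsrc_comp by exact K. subst; auto.
Qed.

Lemma box_vcomp t1 r1 b1 l1 r2 b2 l2 :
  Box t1 r1 b1 l1 -> Box b1 r2 b2 l2 -> Box t1 (cV r1 r2) b2 (cV l1 l2).
Proof.
  intros [A1 [E1 [E2 [E3 E4]]]] [A2 [F1 [F2 [F3 F4]]]].
  assert (K : gtgt (dBv D) A1 = gsrc (dBv D) A2) by (unfold bb, bt in *; congruence).
  exists (gcomp (dBv D) A1 A2). unfold bt, br, bb, bl in *.
  destruct (dg_l_morph D) as [_ [_ [_ a]]]. destruct (dg_r_morph D) as [_ [_ [_ b]]].
  rewrite a, b, gtgt_comp, gsrc_comp by exact K. subst; auto.
Qed.

Lemma box_hinv t r b l : Box t r b l -> Box (iH t) l (iH b) r.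
Proof.
  intros [A [E1 [E2 [E3 E4]]]]. exists (ginv (dBh D) A). unfold bt, br, bb, bl in *.
  rewrite (morph_inv (dg_t_morph D)), (morph_inv (dg_b_morph D)), gtgt_inv, gsrc_inv.
  subst; auto.
Qed.

Lemma box_vinv t r b l : Box t r b l -> Box b (iV r) t (iV l).
Proof.
  intros [A [E1 [E2 [E3 E4]]]]. exists (ginv (dBv D) A). unfold bt, br, bb, bl in *.
  rewrite (morph_inv (dg_l_morph D)), (morph_inv (dg_r_morph D)), gtgt_inv, gsrc_inv.
  subst; auto.
Qed.

Lemma box_hid k : Box (eH (sV k)) k (eH (tV k)) k.
Proof.
  exists (gid (dBh D) k). unfold bt, br, bb, bl.
  destruct (dg_t_morph D) as [_ [_ [a _]]]. destruct (dg_b_morph D) as [_ [_ [b _]]].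
  rewrite a, b, gtgt_id, gsrc_id; auto.
Qed.

Lemma box_fill2 y f : sH y = tV f -> exists t r, Box t r y f.
Proof.
  intros E. destruct (Hfill (x:=y) (f:=iV f)) as [A [E1 E2]].
  { rewrite gsrc_inv; exact E. }
  assert (Bx : Box y (br D A) (bb D A) (iV f)) by (exists A; auto).
  apply box_vinv in Bx. rewrite g_inv_inv in Bx. eauto.
Qed.
Definition St := H -> V -> Prop.

Lemma st_ext (S T : St) : (forall x g, S x g <-> T x g) -> S = T.
Proof.
  intros E. apply functional_extensionality; intro x.
  apply functional_extensionality; intro g. apply propositional_extensionality; auto.
Qed.

Definition actL (S : St) (a : (V + H)%type) : St :=
  match a with
  | inl h => fun x g' => exists g, S x g /\ tV g = sV h /\ g' = cV g h
  | inr y => fun x' g' => exists x g z, S x g /\ Box z g' y g /\ x' = cH x z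
  end.

Definition act (S : St) (w : list (V + H)%type) : St := fold_left actL w S.

Definition Inv (q : P) (S : St) : Prop :=
  (forall x g, S x g -> tV g = q /\ tH x = sV g) /\
  (forall x g z r, S x g -> Box z r (eH q) g -> S (cH x z) r).

Definition sp (p : P) : St := fun x g => Box x g (eH p) (eV p).

Lemma AV_merge S f g : tV f = sV g ->
  actL (actL S (inl f)) (inl g) = actL S (inl (cV f g)).
Proof.
  intros E. apply st_ext; intros x g'; simpl; split.
  - intros [g1 [[g0 [HS [E1 ->]]] [E2 ->]]]. exists g0. split; [exact HS|split].
    + rewrite gsrc_comp by exact E; exact E1.
    + rewrite gcompA; auto.
  - intros [g0 [HS [E1 ->]]]. rewrite gsrc_comp in E1 by exact E.
    exists (cV g0 f). split; [exists g0; auto|split].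
    + rewrite gtgt_comp by exact E1; exact E.
    + rewrite gcompA; auto.
Qed.

Lemma AV_id q S : Inv q S -> actL S (inl (eV q)) = S.
Proof.
  intros [I1 I2]. apply st_ext; intros x g'; simpl; split.
  - intros [g0 [HS [E ->]]]. rewrite gsrc_id in E. rewrite g_idr by exact E. exact HS.
  - intros HS. exists g'. rewrite gsrc_id. destruct (I1 _ _ HS) as [E _].
    split; [exact HS|split; [exact E|]]. rewrite g_idr by exact E; reflexivity.
Qed.

Lemma AH_id q S : Inv q S -> actL S (inr (eH q)) = S.
Proof.
  intros [I1 I2]. apply st_ext; intros x g'; simpl; split.
  - intros [x0 [g0 [z [HS [Bz ->]]]]]. eapply I2; eauto.
  - intros HS. destruct (I1 _ _ HS) as [E1 E2].
    exists x, g', (eH (sV g')). split; [exact HS|split].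
    + pose proof (box_hid g') as Hb. rewrite E1 in Hb. exact Hb.
    + rewrite g_idr by exact E2; reflexivity.
Qed.

Lemma AH_merge q S x y : Inv q S -> sH x = q -> tH x = sH y ->
  actL (actL S (inr x)) (inr y) = actL S (inr (cH x y)).
Proof.
  intros [I1 I2] Ex Exy. apply st_ext; intros x' g'; simpl; split.
  - intros [x1 [g1 [z2 [[x0 [g0 [z1 [HS [B1 ->]]]]] [B2 ->]]]]].
    exists x0, g0, (cH z1 z2). split; [exact HS|split].
    + eapply box_hcomp; eauto.
    + destruct (I1 _ _ HS) as [_ F]. destruct (box_corners B1) as [C1 [C2 _]].
      destruct (box_corners B2) as [C3 _].
      rewrite gcompA; [reflexivity| congruence | congruence].
  - intros [x0 [g0 [z [HS [Bz ->]]]]].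
    destruct (I1 _ _ HS) as [F1 F2].
    destruct (box_fill2 (y:=x) (f:=g0)) as [t1 [r1 B1]]; [congruence|].
    pose proof (box_hcomp (box_hinv B1) Bz) as B2.
    rewrite g_cK2 in B2 by exact Exy.
    exists (cH x0 t1), r1, (cH (iH t1) z). split; [exists x0, g0, t1; auto|split; [exact B2|]].
    destruct (box_corners B1) as [C1 _]. destruct (box_corners Bz) as [C3 _].
    rewrite <- gcompA; [| rewrite gtgt_comp, gsrc_inv by congruence; reflexivity | rewrite gtgt_inv; congruence].
    rewrite g_cK1 by congruence. reflexivity.
Qed.

Lemma Inv_V q S h : Inv q S -> sV h = q -> Inv (tV h) (actL S (inl h)).
Proof.
  intros [I1 I2] Eh. split.
  - intros x g' [g0 [HS [E ->]]]. destruct (I1 _ _ HS) as [F1 F2].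
    rewrite gtgt_comp, gsrc_comp by exact E. auto.
  - intros x g' z r [g0 [HS [E ->]]] Bz. simpl.
    pose proof (box_hid (iV h)) as D0. rewrite gsrc_inv, gtgt_inv in D0.
    pose proof (box_vcomp Bz D0) as B2. rewrite g_cK1 in B2 by exact E.
    destruct (box_corners Bz) as [_ [_ [_ C4]]]. rewrite gtgt_id in C4.
    exists (cV r (iV h)). split.
    + eapply I2; [exact HS|]. rewrite <- Eh. exact B2.
    + split.
      * rewrite gtgt_comp; [apply gtgt_inv| rewrite gsrc_inv; congruence].
      * rewrite g_cK3 by congruence. reflexivity.
Qed.

Lemma Inv_H q S y : Inv q S -> sH y = q -> Inv (tH y) (actL S (inr y)).
Proof.
  intros [I1 I2] Ey. split.
  - intros x' g' [x0 [g0 [z [HS [Bz ->]]]]]. destruct (I1 _ _ HS) as [F1 F2].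
    destruct (box_corners Bz) as [C1 [C2 [C3 C4]]].
    rewrite gtgt_comp by congruence. auto.
  - intros x' g' z' r [x0 [g0 [z [HS [Bz ->]]]]] Bz'. simpl.
    pose proof (box_hcomp Bz Bz') as B2. rewrite g_idr in B2 by reflexivity.
    exists x0, g0, (cH z z'). split; [exact HS|split; [exact B2|]].
    destruct (I1 _ _ HS) as [F1 F2].
    destruct (box_corners Bz) as [C1 [C2 [C3 C4]]].
    destruct (box_corners Bz') as [D1 _].
    rewrite gcompA; [reflexivity|congruence|congruence].
Qed.

Lemma Inv_sp p : Inv p (sp p).
Proof.
  split.
  - intros x g Bx. destruct (box_corners Bx) as [C1 [C2 [C3 C4]]].
    rewrite gtgt_id in C4. auto.
  - intros x g z r Bx Bz. unfold sp in *.
    pose proof (box_hcomp Bx Bz) as B2. rewrite g_idl in B2 by apply gsrc_id. exact B2.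
Qed.
Definition lend (p : P) (w : list (V + H)%type) : P := fold_left (fun _ a => ltgt D a) w p.

Lemma valid_app p w1 w2 : valid D p (w1 ++ w2) <-> valid D p w1 /\ valid D (lend p w1) w2.
Proof.
  revert p; induction w1 as [|a w1 IH]; intros p; simpl.
  - tauto.
  - rewrite IH. unfold lend; simpl. tauto.
Qed.

Lemma Inv_actL q S a : Inv q S -> lsrc D a = q -> Inv (ltgt D a) (actL S a).
Proof. destruct a as [h|y]; simpl; intros; [apply Inv_V with q | apply Inv_H with q]; auto. Qed.

Lemma Inv_act p S w : Inv p S -> valid D p w -> Inv (lend p w) (act S w).
Proof.
  revert p S; induction w as [|a w IH]; intros p S HI Hv; simpl in *.
  - exact HI.
  - destruct Hv as [E Hv]. unfold act, lend; simpl. apply IH; [|exact Hv].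
    apply Inv_actL with p; auto.
Qed.

Lemma act_app S w1 w2 : act S (w1 ++ w2) = act (act S w1) w2.
Proof. unfold act; apply fold_left_app. Qed.

Lemma step_act p S w w' : Inv p S -> valid D p w -> fp_step D w w' -> act S w = act S w'.
Proof.
  intros HI Hv Hs. destruct Hs as [w1 w2 f g E|w1 w2 x y E|w1 w2 q|w1 w2 q];
  rewrite !act_app; apply valid_app in Hv; destruct Hv as [Hv1 Hv2];
  pose proof (Inv_act HI Hv1) as HI1; set (T := act S w1) in *; set (q0 := lend p w1) in *;
  simpl in Hv2; unfold act; cbn [fold_left].
  -
 rewrite AV_merge by exact E. reflexivity.
  - destruct Hv2 as [E1 [E2 _]]. rewrite (AH_merge HI1 E1 E). reflexivity.
  - destruct Hv2 as [E1 _]. rewrite gsrc_id in E1. subst q. rewrite (AV_id HI1). reflexivity.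
  - destruct Hv2 as [E1 _]. rewrite gsrc_id in E1. subst q. rewrite (AH_id HI1). reflexivity.
Qed.
Lemma equiv_act p S w w' : fp_equiv D p w w' -> Inv p S -> act S w = act S w'.
Proof.
  intros He HI. induction He as [w w' [Hv [_ Hs]]| w | w w' _ IH | w1 w2 w3 _ IH1 _ IH2].
  - eapply step_act; eauto.
  - reflexivity.
  - symmetry; exact IH.
  - congruence.
Qed.

Lemma sp_sub p R : Inv p R -> R (eH p) (eV p) -> forall X G, sp p X G -> R X G.
Proof.
  intros [I1 I2] H0 X G HB. pose proof (I2 _ _ _ _ H0 HB) as K.
  destruct (box_corners HB) as [C1 _]. rewrite gsrc_id in C1.
  rewrite g_idl in K by exact C1. exact K.
Qed.

Lemma sp_id p : sp p (eH p) (eV p).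
Proof. unfold sp. pose proof (box_hid (eV p)) as K. rewrite gsrc_id, gtgt_id in K. exact K. Qed.

Lemma gen_box p A : valid D p (box_word D A) ->
  lend p (box_word D A) = p /\ act (sp p) (box_word D A) = sp p.
Proof.
  set (x := bt D A). set (g := br D A). set (y := bb D A). set (h := bl D A).
  assert (BA : Box x g y h) by (exists A; auto).
  destruct (box_corners BA) as [C1 [C2 [C3 C4]]].
  unfold box_word; fold x g y h. simpl. intros [Ex _].
  assert (Eh : sV h = p) by congruence.
  assert (EL : lend p [inr x; inl g; inr (iH y); inl (iV h)] = p).
  { unfold lend; simpl. rewrite gtgt_inv. exact Eh. }
  split; [exact EL|].
  assert (HIR : Inv p (act (sp p) [inr x; inl g; inr (iH y); inl (iV h)])).
  { rewrite <- EL at 1. apply Inv_act; [apply Inv_sp|].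
    simpl. rewrite ?gsrc_inv, ?gtgt_inv. repeat split; auto; congruence. }
  apply st_ext; intros X G; split.
  - intros [g3 [[x2 [g2 [z2 [[g1 [[x0 [g0 [z1 [HS [B1 ->]]]]] [E1 ->]]] [B2 ->]]]]] [E2 ->]]].
    unfold sp in *.
    pose proof (box_hcomp HS B1) as K1. rewrite g_idl in K1 by exact Ex.
    pose proof (box_vcomp K1 BA) as K2.
    pose proof (box_hcomp K2 B2) as K3. rewrite gcomp_inv_r in K3.
    pose proof (box_hid (iV h)) as K4. rewrite gsrc_inv, gtgt_inv in K4.
    rewrite C3 in K3.
    pose proof (box_vcomp K3 K4) as K5.
    rewrite g_idl in K5 by exact Eh. rewrite gcomp_inv_r, Eh in K5. exact K5.
  - intros HB. refine (sp_sub HIR _ HB). unfold act; simpl.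
    destruct (box_fill2 (y:=x) (f:=eV p)) as [t1 [r1 B1]]; [rewrite gtgt_id; exact Ex|].
    destruct (box_corners B1) as [D1 [D2 [D3 D4]]].
    pose proof (box_hinv (box_vcomp B1 BA)) as B2.
    exists (cV (eV p) h). split; [|split].
    + exists (cH (eH p) t1), (cV r1 g), (iH t1). split; [|split; [exact B2|]].
      * exists r1. split; [|split; [congruence|reflexivity]].
        exists (eH p), (eV p), t1. split; [apply sp_id|split; [exact B1|reflexivity]].
      * rewrite gsrc_id in D1. rewrite g_idl by exact D1. rewrite gcomp_inv_r, D1. reflexivity.
    + rewrite gsrc_inv, gtgt_comp; [reflexivity|rewrite gtgt_id; congruence].
    + rewrite g_idl by exact Eh. rewrite gcomp_inv_r, Eh. reflexivity.
Qed.

Lemma gen_box_inv p A : valid D p (box_word_inv D A) ->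
  lend p (box_word_inv D A) = p /\ act (sp p) (box_word_inv D A) = sp p.
Proof.
  set (x := bt D A). set (g := br D A). set (y := bb D A). set (h := bl D A).
  assert (BA : Box x g y h) by (exists A; auto).
  destruct (box_corners BA) as [C1 [C2 [C3 C4]]].
  unfold box_word_inv; fold x g y h. simpl. intros [Eh _].
  assert (Ex : sH x = p) by congruence.
  assert (EL : lend p [inl h; inr y; inl (iV g); inr (iH x)] = p).
  { unfold lend; simpl. rewrite gtgt_inv. exact Ex. }
  split; [exact EL|].
  assert (HIR : Inv p (act (sp p) [inl h; inr y; inl (iV g); inr (iH x)])).
  { rewrite <- EL at 1. apply Inv_act; [apply Inv_sp|].
    simpl. rewrite ?gsrc_inv, ?gtgt_inv. repeat split; auto; congruence. }
  assert (Eid : cV (cV (eV p) h) (iV h) = eV p).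
  { rewrite g_idl by exact Eh. rewrite gcomp_inv_r, Eh. reflexivity. }
  apply st_ext; intros X G; split.
  - intros [x2 [g2 [z2 [[g1 [[x1 [g1' [z1 [[g0 [HS [E1 ->]]] [B1 ->]]]]] [E2 ->]]] [B2 ->]]]]].
    unfold sp in *.
    pose proof (box_hid h) as Hh. rewrite Eh in Hh.
    pose proof (box_vcomp HS Hh) as K1.
    pose proof (box_hcomp K1 B1) as K2. rewrite g_idl in K2 by exact C3.
    pose proof (box_vcomp K2 (box_vinv BA)) as K3.
    pose proof (box_hcomp K3 B2) as K4. rewrite gcomp_inv_r, Ex, Eid in K4. exact K4.
  - intros HB. refine (sp_sub HIR _ HB). unfold act; simpl.
    destruct (box_fill2 (y:=y) (f:=cV (eV p) h)) as [t1 [r1 B1]].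
    { rewrite gtgt_comp; [exact C3|rewrite gtgt_id; congruence]. }
    destruct (box_corners B1) as [D1 [D2 [D3 D4]]].
    pose proof (box_hinv (box_vcomp B1 (box_vinv BA))) as B2. rewrite Eid in B2.
    exists (cH (eH p) t1), (cV r1 (iV g)), (iH t1). split; [|split; [exact B2|]].
    + exists r1. split; [|split; [rewrite gsrc_inv; congruence|reflexivity]].
      exists (eH p), (cV (eV p) h), t1. split; [|split; [exact B1|reflexivity]].
      exists (eV p). split; [apply sp_id|split; [rewrite gtgt_id; congruence|reflexivity]].
    + assert (D1' : sH t1 = p) by (rewrite D1, gsrc_comp, gsrc_id; [reflexivity| rewrite gtgt_id; congruence]).
      rewrite g_idl by exact D1'. rewrite gcomp_inv_r, D1'. reflexivity.
Qed.

Lemma gens_act p s : valid D p (flat_map (signed_box_word D) s) ->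
  act (sp p) (flat_map (signed_box_word D) s) = sp p.
Proof.
  induction s as [|[A b] s IH]; intros Hv; simpl in *.
  - reflexivity.
  - apply valid_app in Hv. destruct Hv as [Hv1 Hv2].
    assert (K : lend p (signed_box_word D (A, b)) = p /\ act (sp p) (signed_box_word D (A, b)) = sp p).
    { unfold signed_box_word in *; simpl in *; destruct b; [apply gen_box|apply gen_box_inv]; exact Hv1. }
    destruct K as [K1 K2]. rewrite K1 in Hv2.
    rewrite act_app, K2. apply IH; exact Hv2.
Qed.

Lemma cancel_H p w1 w2 x : valid D p (w1 ++ inr (iH x) :: inr x :: w2) ->
  fp_equiv D p (w1 ++ inr (iH x) :: inr x :: w2) (w1 ++ w2).
Proof.
  intros Hv. pose proof Hv as Hv'. apply valid_app in Hv'. destruct Hv' as [V1 [E1 [E2 V2]]].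
  simpl in E1, E2, V2. rewrite gtgt_inv in E2. rewrite gsrc_inv in E1.
  assert (Hm : valid D p (w1 ++ inr (eH (tH x)) :: w2)).
  { apply valid_app; split; [exact V1|]. simpl. rewrite gsrc_id, gtgt_id. auto. }
  apply rst_trans with (w1 ++ inr (eH (tH x)) :: w2).
  - apply rst_step. split; [exact Hv|split; [exact Hm|]].
    rewrite <- (gcomp_inv_l (dH D) x). apply fp_mergeH. rewrite gtgt_inv; reflexivity.
  - apply rst_step. split; [exact Hm|split; [|apply fp_idH]].
    apply valid_app; split; [exact V1|]. rewrite <- E1. exact V2.
Qed.

Lemma cancel_V p w1 w2 g : valid D p (w1 ++ inl (iV g) :: inl g :: w2) ->
  fp_equiv D p (w1 ++ inl (iV g) :: inl g :: w2) (w1 ++ w2).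
Proof.
  intros Hv. pose proof Hv as Hv'. apply valid_app in Hv'. destruct Hv' as [V1 [E1 [E2 V2]]].
  simpl in E1, E2, V2. rewrite gtgt_inv in E2. rewrite gsrc_inv in E1.
  assert (Hm : valid D p (w1 ++ inl (eV (tV g)) :: w2)).
  { apply valid_app; split; [exact V1|]. simpl. rewrite gsrc_id, gtgt_id. auto. }
  apply rst_trans with (w1 ++ inl (eV (tV g)) :: w2).
  - apply rst_step. split; [exact Hv|split; [exact Hm|]].
    rewrite <- (gcomp_inv_l (dV D) g). apply fp_mergeV. rewrite gtgt_inv; reflexivity.
  - apply rst_step. split; [exact Hm|split; [|apply fp_idV]].
    apply valid_app; split; [exact V1|]. rewrite <- E1. exact V2.
Qed.

Lemma easy_dir f1 f2 x1 x2 x g : Box x g x1 f1 -> Box x g x2 f2 -> simB D (f1, x1) (f2, x2).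
Proof.
  intros B1 B2. destruct (box_corners B1) as [a1 [a2 [a3 a4]]].
  destruct (box_corners B2) as [b1 [b2 [b3 b4]]].
  destruct B1 as [A [E1 [E2 [E3 E4]]]]. destruct B2 as [A' [F1 [F2 [F3 F4]]]].
  simpl. split; [congruence|split; [congruence|]].
  exists [(A, false); (A', true)].
  simpl. unfold box_word_inv, box_word. rewrite E1, E2, E3, E4, F1, F2, F3, F4. simpl.
  assert (Hv : valid D (sV f1) [inl f1; inr x1; inl (iV g); inr (iH x); inr x; inl g; inr (iH x2); inl (iV f2)]).
  { simpl. repeat rewrite ?gsrc_inv, ?gtgt_inv. repeat split; congruence. }
  split; [exact Hv|].
  apply rst_trans with ([inl f1; inr x1; inl (iV g)] ++ [inl g; inr (iH x2); inl (iV f2)]).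
  - apply (cancel_H (w1 := [inl f1; inr x1; inl (iV g)])). exact Hv.
  - apply (cancel_V (w1 := [inl f1; inr x1]) (w2 := [inr (iH x2); inl (iV f2)])).
    simpl. repeat rewrite ?gsrc_inv, ?gtgt_inv. repeat split; congruence.
Qed.

Lemma hard_dir f1 f2 x1 x2 (Hfx1 : tV f1 = sH x1) (Hfx2 : tV f2 = sH x2) :
  simB D (f1, x1) (f2, x2) -> exists x g, Box x g x1 f1 /\ Box x g x2 f2.
Proof.
  simpl. intros [Er [Et [s [Hv Heq]]]].
  set (p := sV f1) in *.
  assert (K0 : act (sp p) [inl f1; inr x1; inr (iH x2); inl (iV f2)] = sp p).
  { rewrite <- (equiv_act Heq (Inv_sp p)). apply gens_act; exact Hv. }
  assert (HI1 : Inv (tH x1) (act (sp p) [inl f1; inr x1])).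
  { change (tH x1) with (lend p [inl f1; inr x1]). apply Inv_act; [apply Inv_sp|].
    simpl. auto. }
  assert (Heq12 : act (sp p) [inl f1; inr x1] = act (sp p) [inl f2; inr x2]).
  { transitivity (act (act (sp p) [inl f1; inr x1; inr (iH x2); inl (iV f2)]) [inl f2; inr x2]);
      [| rewrite K0; reflexivity].
    rewrite <- act_app.
    change ([inl f1; inr x1; inr (iH x2); inl (iV f2)] ++ [inl f2; inr x2])
      with ([inl f1; inr x1] ++ [inr (iH x2); inl (iV f2); inl f2; inr x2]).
    rewrite act_app. set (S1 := act (sp p) [inl f1; inr x1]) in *.
    unfold act; cbn [fold_left].
    symmetry. rewrite AV_merge by apply gtgt_inv. rewrite gcomp_inv_l.
    assert (HI2 : Inv (tV f2) (actL S1 (inr (iH x2)))).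
    { rewrite Hfx2, <- (gtgt_inv (dH D) x2). apply Inv_H with (tH x1); [exact HI1|].
      rewrite gsrc_inv; symmetry; exact Er. }
    rewrite (AV_id HI2).
    rewrite (AH_merge HI1); [| rewrite gsrc_inv; symmetry; exact Er | rewrite gtgt_inv; reflexivity].
    rewrite gcomp_inv_l. rewrite <- Er. rewrite (AH_id HI1). reflexivity. }
  destruct (box_fill2 (y:=x1) (f:=cV (eV p) f1)) as [t1 [r1 B1]].
  { rewrite gtgt_comp; [symmetry; exact Hfx1|rewrite gtgt_id; reflexivity]. }
  assert (M1 : act (sp p) [inl f1; inr x1] (cH (eH p) t1) r1).
  { unfold act; simpl. exists (eH p), (cV (eV p) f1), t1. split; [|split; [exact B1|reflexivity]].
    exists (eV p). split; [apply sp_id|split; [rewrite gtgt_id; reflexivity|reflexivity]]. }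
  pose proof M1 as M2. rewrite Heq12 in M2.
  unfold act in M2; simpl in M2.
  destruct M2 as [x0 [g1 [z [[g0 [HS [E1 ->]]] [Bz Ez]]]]].
  exists (cH (eH p) t1), r1. split.
  - destruct (box_corners B1) as [T1 _].
    assert (Tt : sH t1 = p) by (rewrite T1, gsrc_comp, gsrc_id; [reflexivity| rewrite gtgt_id; reflexivity]).
    rewrite (g_idl Tt). rewrite g_idl in B1 by reflexivity. exact B1.
  - rewrite Ez. unfold sp in HS.
    pose proof (box_hid f2) as Hh. rewrite <- Et in Hh.
    pose proof (box_hcomp (box_vcomp HS Hh) Bz) as K.
    rewrite g_idl in K by (symmetry; exact Hfx2).
    rewrite g_idl in K by (symmetry; exact Et). exact K.
Qed.
End DG.

Unset Implicit Arguments.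
Set Strict Implicit.

Theorem lemma3p4 (P V H B : Type) (D : double_groupoid P V H B)
  (Hslim : slim D) (Hfill : filling D)
  (f1 f2 : V) (x1 x2 : H)
  (Hfx1 : gtgt (dV D) f1 = gsrc (dH D) x1)
  (Hfx2 : gtgt (dV D) f2 = gsrc (dH D) x2) :
  simB D (f1, x1) (f2, x2) <->
  exists (x : H) (g : V) (A B0 : B),
    bt D A = x /\ br D A = g /\ bl D A = f1 /\ bb D A = x1 /\
    bt D B0 = x /\ br D B0 = g /\ bl D B0 = f2 /\ bb D B0 = x2.
Proof.
  split.
  - intros Hs. destruct (hard_dir Hfill Hfx1 Hfx2 Hs) as [x [g [[A [E1 [E2 [E3 E4]]]] [A' [F1 [F2 [F3 F4]]]]]]].
    exists x, g, A, A'. auto 10.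
  - intros [x [g [A [A' [E1 [E2 [E3 [E4 [F1 [F2 [F3 F4]]]]]]]]]]].
    apply (easy_dir (x:=x) (g:=g)); [exists A|exists A']; auto.
Qed.
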